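(* Let $n\ge1$ and let $k$ be a field with $\mathrm{char}(k)\ne2$. There is a unique $n\times n$ quantum parameter matrix $\mathfrak{q}$ with $\mathrm{Stab}(\mathfrak{q})=\mathfrak{S}_n$, and for it $\mathrm{Aut}_{\mathrm{gr}}(S_{\mathfrak{q}}(k^n))\cong(k^\times)^n\rtimes\mathfrak{S}_n$. Moreover, $\mathfrak{S}_n$ is the only $2$-transitive permutation group acting on $[n]$ which is $\mathrm{Stab}(\mathfrak{q})$ for some $n\times n$ quantum parameter matrix $\mathfrak{q}$.
   Context: An $n\times n$ quantum parameter matrix is a matrix $\mathfrak{q}=(q_{ij})$ over $k$ with $q_{ii}=1$ and $q_{ij}q_{ji}=1$ for all $i,j$. $S_{\mathfrak{q}}(k^n)$ is the $k$-algebra generated by the standard basis $v_1,\dots,v_n$ of $k^n$ with relations $v_jv_i=q_{ij}v_iv_j$, graded by $\deg v_i=1$; $\mathrm{Aut}_{\mathrm{gr}}$ denotes its group of degree-preserving algebra automorphisms, viewed as a subgroup of $\mathrm{GL}(n,k)$. The blocks of $\mathfrak{q}$ are the classes of the partition of $[n]$ with $i\sim j$ iff rows $i,j$ are identical; with $r$ the number of blocks, $\mathfrak{S}_r$ permutes the blocks and $\mathrm{Stab}(\mathfrak{q})=\{\sigma\in\mathfrak{S}_r:|\sigma(B)|=|B|\text{ and }\mathfrak{q}_{BC}=\mathfrak{q}_{\sigma(B)\sigma(C)}\text{ for all blocks }B,C\}$, where $\mathfrak{q}_{BC}=(q_{ij})_{i\in B,j\in C}$. Saying $\mathrm{Stab}(\mathfrak{q})$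 is a given permutation group on $[n]$ means $\mathfrak{q}$ has $n$ blocks (necessarily the singletons $\{i\}$, identified with $i$) and $\mathrm{Stab}(\mathfrak{q})$ equals that group. In $(k^\times)^n\rtimes\mathfrak{S}_n$, $(k^\times)^n$ is the group of invertible diagonal matrices and $\mathfrak{S}_n$ acts by permuting coordinates. *)

(* Defs.v *)
From HB Require Import structures.
From mathcomp Require Import all_boot all_order all_algebra all_fingroup.
Set Implicit Arguments. Unset Strict Implicit. Unset Printing Implicit Defensive.
Import GRing.Theory.
Local Open Scope ring_scope.

Definition qpm (k : fieldType) (n : nat) (q : 'M[k]_n) : Prop :=
  (forall i, q i i = 1) /\ (forall i j, q i j * q j i = 1).

Definition same_row (k : fieldType) (n : nat) (q : 'M[k]_n) (i j : 'I_n) : Prop :=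
  forall l, q i l = q j l.

(* "Stab(q) is the permutation group G on [n]": q has n blocks (so the
   blocks are the singletons {i}, identified with i), and G consists exactly
   of the permutations sigma with |sigma {i}| = |{i}| (automatic) and
   q_{ {i} {j} } = q_{ sigma{i} sigma{j} }, i.e. q i j = q (sigma i) (sigma j). *)
Definition stab_is (k : fieldType) (n : nat) (q : 'M[k]_n)
    (G : {set {perm 'I_n}}) : Prop :=
  (forall i j, same_row q i j -> i = j) /\
  (forall s : {perm 'I_n}, s \in G <-> (forall i j, q i j = q (s i) (s j))).

Definition two_transitive (n : nat) (G : {set {perm 'I_n}}) : Prop :=
  forall i j i' j' : 'I_n, i != j -> i' != j' ->
    exists2 s, s \in G & (s i = i' /\ s j = j').

(* ---- The algebra S_q(k^n) = T(k^n)/I, described degreewise. ----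
   Elements of the free algebra T(k^n) are represented by their coefficient
   functions on words (seq 'I_n); the word w stands for v_{w_1}...v_{w_m}.
   A homogeneous element of degree d is a function vanishing off words of
   length d. *)

(* The generator u * (v_j v_i - q_ij v_i v_j) * w of the relation ideal I. *)
Definition relgen (k : fieldType) (n : nat) (q : 'M[k]_n)
    (u : seq 'I_n) (i j : 'I_n) (w : seq 'I_n) (x : seq 'I_n) : k :=
  (x == u ++ [:: j; i] ++ w)%:R - q i j * (x == u ++ [:: i; j] ++ w)%:R.

(* f lies in the degree-d component I_d of the two-sided ideal I generated by
   the relations v_j v_i - q_ij v_i v_j: f is a linear combination of the
   u * r_ij * w with |u| + 2 + |w| = d. *)
Definition inI (k : fieldType) (n : nat) (q : 'M[k]_n) (d : nat)
    (f : seq 'I_n -> k) : Prop :=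
  exists c : nat -> seq 'I_n -> seq 'I_n -> 'I_n -> 'I_n -> k,
    forall x, f x = \sum_(p < d.-1) \sum_(u : p.-tuple 'I_n)
                    \sum_(w : (d - 2 - p).-tuple 'I_n) \sum_(i : 'I_n) \sum_(j : 'I_n)
                      c p u w i j * relgen q u i j w x.

(* Degree-d component of the algebra endomorphism T(g) of T(k^n) induced by
   the linear map g (v_b |-> sum_a g a b v_a):
   T(g)(v_{t_1}...v_{t_d}) = sum_x prod_m g x_m t_m  v_{x_1}...v_{x_d}. *)
Definition tensg (k : fieldType) (n : nat) (d : nat) (g : 'M[k]_n)
    (f : seq 'I_n -> k) (x : seq 'I_n) : k :=
  if size x == d then
    \sum_(t : d.-tuple 'I_n) (\prod_(p <- zip x t) g p.1 p.2) * f t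
  else 0.

(* Aut_gr(S_q(k^n)) viewed inside GL(n,k): g in GL(n,k) whose induced graded
   algebra automorphism T(g) of the free algebra preserves the ideal I
   (equivalently, descends to a graded automorphism of S_q = T/I; every
   graded automorphism of S_q arises this way from its degree-1 part g). *)
Definition Aut_gr (k : fieldType) (n : nat) (q : 'M[k]_n) (g : 'M[k]_n) : Prop :=
  g \in unitmx /\ (forall d f, inI q d f -> inI q d (tensg d g f)).

(* The subgroup (k^x)^n \rtimes S_n of GL(n,k): invertible diagonal matrix
   times permutation matrix (monomial matrices). *)
Definition monomial (k : fieldType) (n : nat) (g : 'M[k]_n) : Prop :=
  exists (D : 'rV[k]_n) (s : 'S_n),
    (forall i, D 0 i != 0) /\ g = diag_mx D *m perm_mx s.

(* Main.v *)
Require Import Defs.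
From HB Require Import structures.
From mathcomp Require Import all_boot all_order all_algebra all_fingroup.
From mathcomp Require Import zify ring.
Import GRing.Theory.
Local Open Scope ring_scope.



Lemma perm_mx_entry (k : fieldType) n (s : 'S_n) i j :
  (perm_mx s : 'M[k]_n) i j = (s i == j)%:R.
Proof. by rewrite /perm_mx !mxE. Qed.

Lemma sum_tuple_pick (R : comRingType) (T : finType) d (a : seq T)
    (F : seq T -> R) :
  size a = d -> \sum_(t : d.-tuple T) (tval t == a)%:R * F (tval t) = F a.
Proof.
move=> ha; have hb : size a == d by rewrite ha.
rewrite (bigD1 (Tuple hb)) //= eqxx mul1r big1 ?addr0 // => t ht.
have -> : (tval t == a) = false by apply/negbTE.
by rewrite mul0r.
Qed.

Lemma prod_zip_perm (R : comRingType) (T : eqType) (D : T -> R) (s : T -> T)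
    (x t : seq T) : size x = size t ->
  \prod_(p <- zip x t) (D p.1 * (s p.1 == p.2)%:R) = (t == map s x)%:R * \prod_(a <- x) D a.
Proof.
elim: x t => [|a x IH] [|b t] //=.
  by rewrite !big_nil mul1r.
case=> hs; rewrite !big_cons IH //= eqseq_cons (eq_sym b).
case: (s a == b); case: (t == map s x) => /=;
  by rewrite ?mulr1 ?mul1r ?mulr0 ?mul0r ?mulr0.
Qed.

Lemma tensg_mono (k : fieldType) n (D : 'rV[k]_n) (s : 'S_n) d f x :
  size x = d ->
  tensg d (diag_mx D *m perm_mx s) f x = \prod_(a <- x) D 0 a * f (map s x).
Proof.
move=> hx; rewrite /tensg hx eqxx.
have E : forall p : 'I_n * 'I_n, (diag_mx D *m perm_mx s) p.1 p.2 = D 0 p.1 * (s p.1 == p.2)%:R.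
  by move=> p; rewrite mul_diag_mx mxE /perm_mx !mxE.
transitivity (\sum_(t : d.-tuple 'I_n) (tval t == map s x)%:R * (\prod_(a <- x) D 0 a * f t)).
  apply: eq_bigr => t _; rewrite mulrA; congr (_ * _).
  rewrite -prod_zip_perm ?size_tuple //; apply: eq_bigr => p _; exact: E.
by rewrite (@sum_tuple_pick _ _ _ _ (fun t => \prod_(a <- x) D 0 a * f t)) // size_map.
Qed.

Lemma relgen_map (k : fieldType) n (q : 'M[k]_n) (s : 'S_n) u i j w x :
  q (s i) (s j) = q i j ->
  relgen q (map s u) (s i) (s j) (map s w) (map s x) = relgen q u i j w x.
Proof.
move=> hq.
have E : forall y z, (map s x == map s u ++ [:: s y; s z] ++ map s w) = (x == u ++ [:: y; z] ++ w).
  by move=> y z; rewrite -[RHS](inj_eq (inj_map (@perm_inj _ s))) !map_cat.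
by rewrite /relgen !E hq.
Qed.

Lemma relgen_size (k : fieldType) n (q : 'M[k]_n) u i j w x :
  size x != (size u + 2 + size w)%N -> relgen q u i j w x = 0.
Proof.
move=> hs.
have F : forall y z, (x == u ++ [:: y; z] ++ w) = false.
  move=> y z; apply/eqP => e; move: hs; rewrite e !size_cat /=; lia.
by rewrite /relgen !F mulr0 subr0.
Qed.

Lemma relgen_prod (k : fieldType) n (q : 'M[k]_n) (D : 'I_n -> k) u i j w x :
  \prod_(a <- x) D a * relgen q u i j w x =
  \prod_(a <- u ++ [:: i; j] ++ w) D a * relgen q u i j w x.
Proof.
rewrite /relgen !mulrBr; congr (_ - _).
  case: eqP => [->|_]; last by rewrite !mulr0.
  by rewrite !big_cat !big_cons !big_nil /= !mulr1 [D j * D i]mulrC.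
rewrite mulrCA [in RHS]mulrCA; congr (_ * _).
by case: (x =P u ++ [:: i; j] ++ w) => [->|_]; rewrite ?mulr0.
Qed.

Lemma map_tuple_inj n (s : 'S_n) p : injective (@map_tuple p _ _ s).
Proof.
move=> u v /(congr1 val) /= /(inj_map (@perm_inj _ s)) e; exact: val_inj.
Qed.

Lemma mono_preserves (k : fieldType) n (q : 'M[k]_n)
    (hq : forall (s : 'S_n) i j, q i j = q (s i) (s j)) (D : 'rV[k]_n) (s : 'S_n) d f :
  inI q d f -> inI q d (tensg d (diag_mx D *m perm_mx s) f).
Proof.
case=> c Hc.
exists (fun p u w a b => c p (map s u) (map s w) (s a) (s b) *
                         \prod_(e <- u ++ [:: a; b] ++ w) D 0 e) => x.
case: (eqVneq (size x) d) => hx.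
  rewrite tensg_mono // Hc mulr_sumr; apply: eq_bigr => p _.
  rewrite mulr_sumr (reindex_inj (@map_tuple_inj n s p)); apply: eq_bigr => u _.
  rewrite mulr_sumr (reindex_inj (@map_tuple_inj n s _)); apply: eq_bigr => w _.
  rewrite mulr_sumr (reindex_inj (@perm_inj _ s)); apply: eq_bigr => a _.
  rewrite mulr_sumr (reindex_inj (@perm_inj _ s)); apply: eq_bigr => b _.
  rewrite /= relgen_map -?hq // mulrCA (@relgen_prod _ _ q (fun e => D 0 e)).
  by rewrite mulrA.
rewrite /tensg (negbTE hx).
symmetry; apply: big1 => p _; apply: big1 => u _; apply: big1 => w _.
apply: big1 => a _; apply: big1 => b _.
rewrite relgen_size ?mulr0 // !size_tuple.
move: hx (ltn_ord p); lia.
Qed.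

Lemma sum_tuple0 (R : comRingType) (T : finType) (F : 0.-tuple T -> R) :
  \sum_(u : 0.-tuple T) F u = F [tuple].
Proof. by rewrite (big_pred1 [tuple]) // => u /=; rewrite [u]tuple0; apply/esym/eqP. Qed.

Lemma inI2_diag (k : fieldType) n (q : 'M[k]_n) (h : seq 'I_n -> k) k0 :
  (forall a, q a a = 1) -> inI q 2 h -> h [:: k0; k0] = 0.
Proof.
move=> hd [c ->].
apply: big1 => p _; apply: big1 => u _; apply: big1 => w _.
apply: big1 => a _; apply: big1 => b _.
case: (eqVneq (size [:: k0; k0]) (size u + 2 + size w)%N) => hs; last first.
  by rewrite relgen_size ?mulr0.
have hu : tval u = [::] by apply/size0nil; move: hs => /= ; lia.
have hw : tval w = [::] by apply/size0nil; move: hs => /= ; lia.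
rewrite /relgen hu hw /=.
case: (eqVneq a b) => [->|ab]; first by rewrite hd mul1r subrr mulr0.
have -> : ([:: k0; k0] == [:: b; a]) = false.
  by apply/eqP => [[e1 e2]]; rewrite -e1 -e2 eqxx in ab.
have -> : ([:: k0; k0] == [:: a; b]) = false.
  by apply/eqP => [[e1 e2]]; rewrite -e1 -e2 eqxx in ab.
by rewrite mulr0 subrr mulr0.
Qed.

Lemma relgen_in_I (k : fieldType) n (q : 'M[k]_n) i j :
  inI q 2 (relgen q [::] i j [::]).
Proof.
exists (fun p u w a b => ((a == i) && (b == j))%:R) => x.
rewrite big_ord1 sum_tuple0 sum_tuple0 /=.
symmetry.
rewrite (bigD1 i) //= [X in _ + X]big1 => [|a /negPf ha]; last by apply: big1 => b _; rewrite ha mul0r.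
rewrite addr0 (bigD1 j) //= [X in _ + X]big1 => [|b /negPf hb]; last by rewrite hb andbF mul0r.
by rewrite addr0 !eqxx mul1r.
Qed.

Lemma tensg_rel (k : fieldType) n (q g : 'M[k]_n) i j k0 :
  tensg 2 g (relgen q [::] i j [::]) [:: k0; k0] =
  g k0 j * g k0 i - q i j * (g k0 i * g k0 j).
Proof.
rewrite /tensg /= /relgen /=.
pose P (t : seq 'I_n) := \prod_(p <- zip [:: k0; k0] t) g p.1 p.2.
transitivity (\sum_(t : 2.-tuple 'I_n) (tval t == [:: j; i])%:R * P t -
   \sum_(t : 2.-tuple 'I_n) (tval t == [:: i; j])%:R * (q i j * P t)).
  rewrite -sumrB; apply: eq_bigr => t _; rewrite /P; ring.
rewrite (@sum_tuple_pick _ _ 2 _ P) // (@sum_tuple_pick _ _ 2 _ (fun t => q i j * P t)) //.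
by rewrite /P /= !big_cons !big_nil /= !mulr1.
Qed.

Lemma aut_mono (k : fieldType) n (q g : 'M[k]_n) :
  (2%:R : k) != 0 -> (forall a, q a a = 1) ->
  (forall i j, i != j -> q i j = -1) -> Aut_gr q g -> monomial g.
Proof.
move=> two hd hoff [gu hg].
have zp : forall i j k0, i != j -> g k0 i * g k0 j = 0.
  move=> i j k0 ij.
  have := @inI2_diag _ _ q _ k0 hd (hg _ _ (@relgen_in_I _ _ q i j)).
  rewrite tensg_rel hoff // => /eqP.
  have -> : g k0 j * g k0 i - -1 * (g k0 i * g k0 j) = 2%:R * (g k0 i * g k0 j) by ring.
  by rewrite mulf_eq0 (negbTE two) /= => /eqP.
have col : forall j, exists r, g r j != 0.
  move=> j; case: (boolP [exists r, g r j != 0]) => [/existsP //|/existsPn H].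
  have := mulVmx gu; move/matrixP => /(_ j j); rewrite !mxE eqxx /=.
  rewrite big1 => [|r _]; last by rewrite (eqP (negPn (H r))) mulr0.
  by move/eqP; rewrite eq_sym oner_eq0.
pose r j := odflt j [pick r0 | g r0 j != 0].
have hr : forall j, g (r j) j != 0.
  move=> j; rewrite /r; case: pickP => [//|H].
  by have [r0] := col j; rewrite (H r0).
have rinj : injective r.
  move=> j j' e; apply/eqP; apply/negPn/negP => jj.
  have := zp _ _ (r j) jj; apply/eqP; rewrite mulf_neq0 // e; exact: hr.
pose s := (perm rinj)^-1%g.
have rs : forall i, r (s i) = i by move=> i; rewrite -(permE rinj) /s permKV.
exists (\row_i g i (s i)), s; split.
  by move=> i; rewrite mxE -{1}(rs i) hr.
apply/matrixP => i j; rewrite mul_diag_mx !mxE.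
case: (eqVneq (s i) j) => [<-|ne]; first by rewrite mulr1.
rewrite mulr0; apply/eqP; move: (zp _ _ i ne); move/eqP; rewrite mulf_eq0.
by rewrite -{1}(rs i) (negbTE (hr _)).
Qed.

Lemma key_off (k : fieldType) n (q : 'M[k]_n) :
  qpm q -> stab_is q [set: {perm 'I_n}] -> forall i j, i != j -> q i j = -1.
Proof.
move=> [hd hp] [hrow hst] i j ij.
have ht : forall a b, q a b = q (tperm i j a) (tperm i j b).
  by move=> a b; apply: (proj1 (hst (tperm i j)) (in_setT _)).
have sym : q j i = q i j by rewrite [RHS]ht tpermL tpermR.
have h1 : q i j * q i j = 1 by rewrite -{2}sym hp.
have n1 : q i j != 1.
  apply/eqP => e; move/eqP: ij; apply; apply: hrow => l.
  case: (eqVneq l i) => [->|li]; first by rewrite hd sym e.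
  case: (eqVneq l j) => [->|lj]; first by rewrite hd e.
  by rewrite ht tpermL tpermD // eq_sym.
have : (q i j - 1) * (q i j + 1) = q i j * q i j - 1 by ring.
rewrite h1 subrr => /eqP; rewrite mulf_eq0 subr_eq0 (negbTE n1) /= addr_eq0 => /eqP //.
Qed.

Theorem proposition3p1 (k : fieldType) (n : nat) :
  (0 < n)%N -> ~~ (2%N \in [pchar k]) ->
  (exists! q : 'M[k]_n, qpm q /\ stab_is q [set: {perm 'I_n}]) /\
  (forall q : 'M[k]_n, qpm q -> stab_is q [set: {perm 'I_n}] ->
     forall g : 'M[k]_n, Aut_gr q g <-> monomial g) /\
  (forall G : {group {perm 'I_n}}, two_transitive G ->
     (exists q : 'M[k]_n, qpm q /\ stab_is q G) -> G = [set: {perm 'I_n}] :> {set _}).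
Proof.
move=> n0 h2.
have two : (2%:R : k) != 0 by move: h2; rewrite inE /=.
split.
  pose q0 : 'M[k]_n := \matrix_(i, j) (if i == j then 1 else -1).
  exists q0; split.
    split; first split.
    - by move=> i; rewrite mxE eqxx.
    - move=> i j; rewrite !mxE eq_sym; case: eqP => _; rewrite ?mulr1 //.
      by rewrite mulrNN mulr1.
    split.
    - move=> i j /(_ i); rewrite !mxE eqxx; case: (eqVneq j i) => [->//|_] e.
      by move: two; rewrite mulr2n {1}e addNr eqxx.
    - move=> s; split => [_ i j|_]; [by rewrite !mxE (inj_eq perm_inj) | by rewrite inE].
  move=> q [hq hs]; apply/matrixP => i j; rewrite mxE.
  case: (eqVneq i j) => [->|ij]; first by rewrite hq.1.
  by rewrite (@key_off _ _ q).
split.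
  move=> q hq hs g; split.
    exact: (@aut_mono _ _ q g two hq.1 (@key_off _ _ q hq hs)).
  move=> [D [s [hD ->]]]; split.
    rewrite unitmx_mul unitmx_perm andbT unitmxE det_diag unitfE.
    by apply/prodf_neq0 => i _.
  by apply: mono_preserves => s' i j; apply: (proj1 (hs.2 s') (in_setT _)).
move=> G htt [q [hq [hrow hst]]].
apply/setP => s; rewrite inE; apply: (proj2 (hst s)) => i j.
case: (eqVneq i j) => [->|ij]; first by rewrite !hq.1.
have sij : s i != s j by rewrite (inj_eq perm_inj).
have [h hG [e1 e2]] := htt i j (s i) (s j) ij sij.
by rewrite -e1 -e2; exact: (proj1 (hst h) hG).
Qed.
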